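(* Let $\alpha=(i_1^{\alpha_1},i_2^{\alpha_2},\ldots,i_m^{\alpha_m})$ be a partition of $n$ (the $i_j$ distinct part sizes, $\alpha_j$ their multiplicities). Then $$\mathbf{K}_{\alpha}=\mathbf{C}_{i_1}(X^{\alpha_1})\cdot\mathbf{C}_{i_2}(X^{\alpha_2})\cdots\mathbf{C}_{i_m}(X^{\alpha_m}),$$ where $\mathbf{C}_{i}(X^{a})$ denotes the composition $\mathbf{C}_{(i)}\circ X^{a}$.
   Context: Species are functors from finite sets with bijections to finite sets; equality means natural isomorphism. For $H\le S_n$, $X^n/H$ is the species with $(X^n/H)[U]=\{\lambda H:\lambda:[n]\to U\text{ bijection}\}$ ($\lambda H=\{\lambda\circ f:f\in H\}$), transport $(X^n/H)[\tau](\lambda H)=(\tau\lambda)H$. For a partition $\beta$ of $N$, $\sigma_\beta$ is the standard permutation filling cycles of lengths $\beta_1,\beta_2,\ldots$ with $1,\ldots,N$ in increasing order, and $\mathbf{C}_\beta:=X^N/\langle\sigma_\beta\rangle$. For $\alpha=(i_1^{\alpha_1},\ldots,i_m^{\alpha_m})$, $\mathbf{K}_\alpha$ is defined as the species product $\mathbf{C}_{i_m^{\alpha_m}}\cdot\mathbf{C}_{i_{m-1}^{\alpha_{m-1}}}\cdots\mathbf{C}_{i_1^{\alpha_1}}$, equivalently $X^n/G_\alpha$ with $G_\alpha$ the direct product of the cyclic groups generated by the standard permutations of shapes $i_j^{\alpha_j}$ acting on consecutive disjoint blocks of $[n]$. The product of species is $(F\cdot G)[U]=\bigsqcup_{U=U_1\sqcup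 U_2}F[U_1]\times G[U_2]$. $X^a$ is the species of lists of length $a$, and $(F\circ G)[U]=\bigsqcup_\pi F[\pi]\times\prod_{B\in\pi}G[B]$ over set partitions $\pi$ of $U$. *)

(* Defs.v *)
From mathcomp Require Import all_boot all_fingroup.
From Stdlib Require Import Lia.
From mathcomp Require Import zify.

Set Implicit Arguments.
Unset Strict Implicit.
Unset Printing Implicit Defensive.

Record bij (U V : finType) := Bij {
  bfun :> U -> V;
  binv : V -> U;
  bK : cancel bfun binv;
  bKV : cancel binv bfun }.

Definition bij_inv (U V : finType) (s : bij U V) : bij V U :=
  @Bij V U (binv s) s (@bKV _ _ s) (@bK _ _ s).

Record species := Species {
  sp_obj : finType -> finType;
  sp_map : forall U V : finType, bij U V -> sp_obj U -> sp_obj V }.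
Arguments sp_map s {U V} _ _.
Arguments sp_obj s U.

(* Functoriality (not needed to state the theorem; all species built below
   are functors). *)
Definition is_functor (F : species) : Prop :=
  (forall U (x : sp_obj F U), sp_map F (@Bij U U id id (fun _ => erefl) (fun _ => erefl)) x = x) /\
  (forall U V W (s : bij U V) (t : bij V W) (c : bij U W),
     (forall x, c x = t (s x)) ->
     forall x, sp_map F c x = sp_map F t (sp_map F s x)).

(* Equality of species = natural isomorphism. *)
Definition species_iso (F G : species) : Prop :=
  exists phi : forall U : finType, sp_obj F U -> sp_obj G U,
    (forall U, bijective (phi U)) /\
    (forall U V (s : bij U V) (x : sp_obj F U),
        phi V (sp_map F s x) = sp_map G s (phi U x)).

Definition elt (U : finType) (A : {set U}) : finType := {x : U | x \in A}.

Definition restr_bij (U V : finType) (s : bij U V) (A : {set U}) (A' : {set V})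
  (h1 : forall x, x \in A -> s x \in A') (h2 : forall y, y \in A' -> binv s y \in A) :
  bij (elt A) (elt A').
Proof.
refine (@Bij (elt A) (elt A') (fun x => exist _ (s (val x)) (h1 _ (valP x)))
                              (fun y => exist _ (binv s (val y)) (h2 _ (valP y))) _ _).
- by move=> x; apply: val_inj => /=; rewrite bK.
- by move=> y; apply: val_inj => /=; rewrite bKV.
Defined.

Lemma bij_in (U V : finType) (s : bij U V) (A : {set U}) x :
  x \in A -> s x \in s @: A.
Proof. exact: imset_f. Qed.

Lemma bij_inV (U V : finType) (s : bij U V) (A : {set U}) y :
  y \in s @: A -> binv s y \in A.
Proof. by case/imsetP=> x xA ->; rewrite bK. Qed.

Lemma bij_inC (U V : finType) (s : bij U V) (A : {set U}) x :
  x \in ~: A -> s x \in ~: (s @: A).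
Proof. by rewrite !inE; apply: contra => /bij_inV; rewrite bK. Qed.

Lemma bij_inCV (U V : finType) (s : bij U V) (A : {set U}) y :
  y \in ~: (s @: A) -> binv s y \in ~: A.
Proof. by rewrite !inE; apply: contra => /(bij_in s); rewrite bKV. Qed.

Definition set_bij (U V : finType) (s : bij U V) : bij {set U} {set V}.
Proof.
refine (@Bij _ _ (fun A : {set U} => s @: A) (fun B : {set V} => binv s @: B) _ _).
- move=> A; rewrite -imset_comp (eq_imset _ (@bK _ _ s)); exact: imset_id.
- move=> B; rewrite -imset_comp (eq_imset _ (@bKV _ _ s)); exact: imset_id.
Defined.

Definition one_sp : species.
Proof.
refine (@Species (fun U => ({_ : unit | #|U| == 0} : finType)) _).
move=> U V s x; exists tt.
have -> : #|V| = #|U| by apply/esym/bij_eq_card; exists (binv s); [exact: bK | exact: bKV].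
exact: (valP x).
Defined.

Definition prod_sp (F G : species) : species.
Proof.
refine (@Species (fun U => ({A : {set U} & (sp_obj F (elt A) * sp_obj G (elt (~: A)))%type} : finType)) _).
move=> U V s [A [x y]].
exists (s @: A); split.
- exact: (sp_map F (restr_bij (@bij_in _ _ s A) (@bij_inV _ _ s A)) x).
- exact: (sp_map G (restr_bij (@bij_inC _ _ s A) (@bij_inCV _ _ s A)) y).
Defined.

Fixpoint prod_list (l : seq species) : species :=
  match l with
  | [::] => one_sp
  | [:: F] => F
  | F :: l' => prod_sp F (prod_list l')
  end.

Definition blk (U : finType) (P : {set {set U}}) : finType := {B : {set U} | B \in P}.

Lemma bij_setT (U V : finType) (s : bij U V) : s @: [set: U] = [set: V].
Proof.
apply/setP=> y; rewrite inE; apply/imsetP; exists (binv s y); rewrite ?inE ?bKV //.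
Qed.

Lemma bij_partition (U V : finType) (s : bij U V) (P : {set {set U}}) :
  partition P [set: U] -> partition (set_bij s @: P) [set: V].
Proof.
have inj_s : injective s by apply: can_inj (@bK _ _ s).
by rewrite -(bij_setT s) -(imset_partition P _ inj_s).
Qed.

Definition comp_sp (F G : species) : species.
Proof.
refine (@Species (fun U =>
  ({P : {P : {set {set U}} | partition P [set: U]} &
     (sp_obj F (blk (val P)) *
      {dffun forall B : blk (val P), sp_obj G (elt (val B))})%type} : finType)) _).
move=> U V s [[P partP] [x h]] /=.
pose sb := @restr_bij _ _ (set_bij s) P (set_bij s @: P)
              (@bij_in _ _ (set_bij s) P) (@bij_inV _ _ (set_bij s) P).
exists (exist _ (set_bij s @: P) (bij_partition s partP)); split.
- exact: (sp_map F sb x).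
- exact: [ffun B' : blk (set_bij s @: P) =>
            sp_map G (@restr_bij _ _ s (val (binv sb B')) (val B')
                        (@bij_inV _ _ (bij_inv s) (val B'))
                        (@bij_in _ _ (bij_inv s) (val B')))
                   (h (binv sb B'))].
Defined.

(* X^a : lists of length a, i.e. bijections [a] -> U. *)
Definition Xpow (a : nat) : species.
Proof.
refine (@Species (fun U => ({l : {ffun 'I_a -> U} | injectiveb l && (#|U| == a)} : finType)) _).
move=> U V s [l /andP[linj cU]].
exists [ffun i => s (l i)]; apply/andP; split.
- apply/injectiveP => i j; rewrite !ffunE => /(can_inj (@bK _ _ s)).
  exact: (injectiveP _ linj).
- have -> : #|V| = #|U| by apply/esym/bij_eq_card; exists (binv s); [exact: bK | exact: bKV].
  exact: cU.
Defined.

(* X^n/H : left cosets lambda H of bijections lambda : [n] -> U. *)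
Definition coset_of (n : nat) (U : finType) (H : {set 'S_n}) (l : {ffun 'I_n -> U})
  : {set {ffun 'I_n -> U}} := [set [ffun i => l (f i)] | f : 'S_n in H].

Definition quot_sp (n : nat) (H : {group 'S_n}) : species.
Proof.
refine (@Species (fun U => ({S : {set {ffun 'I_n -> U}} |
   [exists l : {ffun 'I_n -> U}, [&& injectiveb l, #|U| == n & S == coset_of H l]]} : finType)) _).
move=> U V s [S hS].
exists [set [ffun i => s (g i)] | g : {ffun 'I_n -> U} in S].
case/existsP: hS => l /and3P[linj cU /eqP eS].
apply/existsP; exists [ffun i => s (l i)]; apply/and3P; split.
- apply/injectiveP => i j; rewrite !ffunE => /(can_inj (@bK _ _ s)).
  exact: (injectiveP _ linj).
- have -> : #|V| = #|U| by apply/esym/bij_eq_card; exists (binv s); [exact: bK | exact: bKV].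
  exact: cU.
- rewrite eS /coset_of -imset_comp; apply/eqP/eq_imset => f /=.
  by apply/ffunP => i; rewrite !ffunE.
Defined.

(* The standard permutation sigma_beta of shape beta (0-indexed):
   cycles (0 1 ... b1-1)(b1 ... b1+b2-1)... *)
Fixpoint cyc_fun (b : seq nat) (i : nat) : nat :=
  match b with
  | [::] => i
  | k :: b' => if i < k then (if i.+1 < k then i.+1 else 0) else k + cyc_fun b' (i - k)
  end.

Lemma cyc_lt b i : i < sumn b -> cyc_fun b i < sumn b.
Proof.
elim: b i => [|k b IH] i //= hi.
case: ifP => ik; first by case: ifP => h; lia.
have := IH (i - k); lia.
Qed.

Lemma cyc_inj b i j : i < sumn b -> j < sumn b -> cyc_fun b i = cyc_fun b j -> i = j.
Proof.
elim: b i j => [|k b IH] i j //= hi hj.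
case: (ltnP i k) => ik; case: (ltnP j k) => jk.
- by case: (ltnP i.+1 k) => h1; case: (ltnP j.+1 k) => h2; lia.
- by case: (ltnP i.+1 k) => h1; lia.
- by case: (ltnP j.+1 k) => h1; lia.
- move=> e; have := IH (i - k) (j - k); lia.
Qed.

Definition sigma_fun (b : seq nat) (i : 'I_(sumn b)) : 'I_(sumn b) :=
  Ordinal (cyc_lt (ltn_ord i)).

Lemma sigma_inj b : injective (@sigma_fun b).
Proof. by move=> i j /(congr1 val) /= /cyc_inj e; apply: val_inj; apply: e. Qed.

Definition sigma (b : seq nat) : 'S_(sumn b) := perm (@sigma_inj b).

Definition Cyc (b : seq nat) : species := quot_sp <[sigma b]>%G.

(* A partition alpha = (i_1^{a_1}, ..., i_m^{a_m}) is encoded as the list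
   [:: (i_1, a_1); ...; (i_m, a_m)].  The shape i^a is nseq a i. *)
Definition Kalpha (alpha : seq (nat * nat)) : species :=
  prod_list [seq Cyc (nseq p.2 p.1) | p <- rev alpha].

(* Main.v *)
Require Import Defs.
From mathcomp Require Import all_boot all_fingroup.
From Stdlib Require Import Lia.
From mathcomp Require Import zify.
Set Implicit Arguments.
Unset Strict Implicit.
Unset Printing Implicit Defensive.

Section BInv.
Variables (T1 T2 : finType) (f : T1 -> T2) (bf : bijective f).
Lemma bsurj y : exists x, f x == y.
Proof. case: bf => g K1 K2; exists (g y); by rewrite K2. Qed.
Definition binvf y := xchoose (bsurj y).
Lemma binvfK : cancel binvf f.
Proof. by move=> y; apply/eqP; exact: (xchooseP (bsurj y)). Qed.
Lemma binvfK' : cancel f binvf.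
Proof. move=> x; apply: (bij_inj bf); exact: binvfK. Qed.
End BInv.

Lemma iso_refl F : species_iso F F.
Proof. by exists (fun U x => x); split=> // U; exists id. Qed.

Lemma iso_sym F G : species_iso F G -> species_iso G F.
Proof.
case=> phi [bphi nat].
exists (fun U => binvf (bphi U)); split.
- move=> U; exists (phi U); [exact: binvfK | exact: binvfK'].
- move=> U V s y; apply: (bij_inj (bphi V)).
  by rewrite binvfK nat binvfK.
Qed.

Lemma iso_trans F G H : species_iso F G -> species_iso G H -> species_iso F H.
Proof.
case=> phi [bphi nphi] [psi [bpsi npsi]].
exists (fun U x => psi U (phi U x)); split.
- move=> U; exact: bij_comp.
- by move=> U V s x; rewrite nphi npsi.
Qed.

Lemma injsurj_bij (T1 T2 : finType) (f : T1 -> T2) :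
  injective f -> (forall y, exists x, f x = y) -> bijective f.
Proof.
move=> fi fs; have fs' : forall y, exists x, f x == y.
  by move=> y; case: (fs y) => x <-; exists x.
exists (fun y => xchoose (fs' y)).
- by move=> x; apply: fi; apply/eqP; exact: (xchooseP (fs' (f x))).
- by move=> y; apply/eqP; exact: (xchooseP (fs' y)).
Qed.

Lemma prod_cong F F' G G' : species_iso F F' -> species_iso G G' ->
  species_iso (prod_sp F G) (prod_sp F' G').
Proof.
case=> phi [bphi nphi] [psi [bpsi npsi]].
exists (fun U (z : sp_obj (prod_sp F G) U) =>
  let: existT A (x, y) := z in
  (existT _ A (phi _ x, psi _ y) : sp_obj (prod_sp F' G') U)); split.
- move=> U; exists (fun (z : sp_obj (prod_sp F' G') U) =>
  let: existT A (x, y) := z in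
  (existT _ A (binvf (bphi _) x, binvf (bpsi _) y) : sp_obj (prod_sp F G) U)).
  + by case=> A [x y] /=; rewrite !binvfK'.
  + by case=> A [x y] /=; rewrite !binvfK.
- move=> U V s [A [x y]] /=. by rewrite nphi npsi.
Qed.

Lemma prod_list_cong (A : eqType) (f g : A -> species) (s : seq A) :
  {in s, forall x, species_iso (f x) (g x)} ->
  species_iso (prod_list (map f s)) (prod_list (map g s)).
Proof.
elim: s => [|x s IH] H /=; first exact: iso_refl.
have Hx : species_iso (f x) (g x) by apply: H; rewrite inE eqxx.
have Hs : {in s, forall x, species_iso (f x) (g x)}.
  by move=> y ys; apply: H; rewrite inE ys orbT.
move: IH Hs; clear H; case: s => [|y s] IH Hs //=.
exact: prod_cong (IH Hs).
Qed.

Definition comp_cong F F' G : species_iso F F' ->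
  species_iso (comp_sp F G) (comp_sp F' G).
Proof.
case=> phi [bphi nphi].
exists (fun U (z : sp_obj (comp_sp F G) U) =>
  let: existT P (x, h) := z in
  (existT _ P (phi _ x, h) : sp_obj (comp_sp F' G) U)); split.
- move=> U; exists (fun (z : sp_obj (comp_sp F' G) U) =>
  let: existT P (x, h) := z in
  (existT _ P (binvf (bphi _) x, h) : sp_obj (comp_sp F G) U)).
  + by case=> A [x y] /=; rewrite !binvfK'.
  + by case=> A [x y] /=; rewrite !binvfK.
- move=> U V s [[P pP] [x h]] /=. by rewrite nphi.
Qed.

Definition prec (T U : finType) (p : {ffun T -> T}) (l : {ffun T -> U}) : {ffun T -> U} :=
  [ffun t => l (p t)].
Definition postc (T U V : finType) (s : U -> V) (l : {ffun T -> U}) : {ffun T -> V} :=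
  [ffun t => s (l t)].
Definition cosetQ (T U : finType) (Sg : {set {ffun T -> T}}) (l : {ffun T -> U}) :=
  [set prec p l | p in Sg].
Definition Qok (T : finType) (Sg : {set {ffun T -> T}}) (U : finType) (S : {set {ffun T -> U}}) :=
  [exists l : {ffun T -> U}, [&& injectiveb l, #|U| == #|T| & S == cosetQ Sg l]].

Lemma bij_card (U V : finType) (s : bij U V) : #|U| = #|V|.
Proof. apply: bij_eq_card; exists (binv s); [exact: bK | exact: bKV]. Qed.

Lemma postc_coset (T U V : finType) Sg (s : U -> V) (l : {ffun T -> U}) :
  [set postc s g | g in cosetQ Sg l] = cosetQ Sg (postc s l).
Proof.
rewrite /cosetQ -imset_comp; apply: eq_imset => p /=.
by apply/ffunP => t; rewrite !ffunE.
Qed.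

Lemma Qok_map (T : finType) Sg (U V : finType) (s : bij U V) (S : {set {ffun T -> U}}) :
  Qok Sg S -> Qok Sg [set postc s g | g in S].
Proof.
case/existsP=> l /and3P[li cU /eqP ->]; apply/existsP; exists (postc s l).
rewrite postc_coset eqxx -(bij_card s) cU !andbT.
apply/injectiveP => i j; rewrite !ffunE => /(can_inj (@bK _ _ s)).
exact: (injectiveP _ li).
Qed.

Definition Qsp (T : finType) (Sg : {set {ffun T -> T}}) : species :=
  @Species (fun U => ({S : {set {ffun T -> U}} | Qok Sg S} : finType))
    (fun U V s S => exist _ [set postc s g | g in val S] (Qok_map s (valP S))).

Definition oneF (T : finType) : {ffun T -> T} := [ffun t => t].

Definition SgH n (H : {set 'S_n}) : {set {ffun 'I_n -> 'I_n}} := [set [ffun i => (f : 'S_n) i] | f in H].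

Lemma quot_Q n (H : {group 'S_n}) : species_iso (quot_sp H) (Qsp (SgH H)).
Proof.
have E : forall (U : finType) (l : {ffun 'I_n -> U}), Defs.coset_of H l = cosetQ (SgH H) l.
  move=> U l; rewrite /cosetQ /SgH -imset_comp; apply: eq_imset => f /=.
  by apply/ffunP => i; rewrite !ffunE.
have ok : forall (U : finType) (S : sp_obj (quot_sp H) U), Qok (SgH H) (val S).
  move=> U [S /= /existsP[l /and3P[li cU /eqP eS]]]; apply/existsP; exists l.
  by rewrite li card_ord cU -E eS eqxx.
have ok' : forall (U : finType) (S : sp_obj (Qsp (SgH H)) U),
   [exists l : {ffun 'I_n -> U}, [&& injectiveb l, #|U| == n & val S == Defs.coset_of H l]].
  move=> U [S /= /existsP[l /and3P[li cU /eqP eS]]]; apply/existsP; exists l.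
  by rewrite li E eS eqxx -[X in #|U| == X](card_ord n) cU.
exists (fun U S => exist _ (val S) (ok U S)); split.
- move=> U; exists (fun S => exist _ (val S) (ok' U S) : sp_obj (quot_sp H) U).
  + by move=> S; apply: val_inj.
  + by move=> S; apply: val_inj.
- move=> U V s [S hS]; apply: val_inj => /=.
  by apply: eq_imset => g; apply/ffunP=> i; rewrite !ffunE.
Qed.

Lemma oneF_SgH n (H : {group 'S_n}) : oneF _ \in SgH H.
Proof. apply/imsetP; exists 1%g; first exact: group1. by apply/ffunP=> i; rewrite !ffunE perm1. Qed.

Definition sumf (T1 T2 U : finType) (g1 : {ffun T1 -> U}) (g2 : {ffun T2 -> U}) :
  {ffun (T1 + T2)%type -> U} :=
  [ffun t => match t with inl a => g1 a | inr b => g2 b end].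

Definition Ssum (T1 T2 : finType) (S1 : {set {ffun T1 -> T1}}) (S2 : {set {ffun T2 -> T2}}) :
  {set {ffun (T1 + T2)%type -> (T1 + T2)%type}} :=
  [set sumf (postc inl p1) (postc inr p2) | p1 in S1, p2 in S2].

Lemma oneF_Ssum (T1 T2 : finType) (S1 : {set {ffun T1 -> T1}}) (S2 : {set {ffun T2 -> T2}}) :
  oneF _ \in S1 -> oneF _ \in S2 -> oneF _ \in Ssum S1 S2.
Proof.
move=> h1 h2; apply/imset2P; exists (oneF T1) (oneF T2) => //.
by apply/ffunP => -[a|b]; rewrite !ffunE.
Qed.

Lemma sum_coset (T1 T2 U1 U2 U : finType) (S1 : {set {ffun T1 -> T1}}) (S2 : {set {ffun T2 -> T2}})
  (f1 : U1 -> U) (f2 : U2 -> U) (l1 : {ffun T1 -> U1}) (l2 : {ffun T2 -> U2}) :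
  [set sumf (postc f1 g1) (postc f2 g2) | g1 in cosetQ S1 l1, g2 in cosetQ S2 l2]
  = cosetQ (Ssum S1 S2) (sumf (postc f1 l1) (postc f2 l2)).
Proof.
apply/setP => g; apply/imset2P/imsetP.
- case=> g1 g2 /imsetP[p1 p1S ->] /imsetP[p2 p2S ->] ->.
  exists (sumf (postc inl p1) (postc inr p2)); first by apply/imset2P; exists p1 p2.
  by apply/ffunP => -[a|b]; rewrite !ffunE.
- case=> p /imset2P[p1 p2 p1S p2S ->] ->.
  exists (prec p1 l1) (prec p2 l2); [exact: imset_f | exact: imset_f |].
  by apply/ffunP => -[a|b]; rewrite !ffunE.
Qed.

Lemma card_elt (U : finType) (A : {set U}) : #|elt A| = #|A|.
Proof. by rewrite card_sig; apply: eq_card. Qed.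

Section QProd.
Variables (T1 T2 : finType) (S1 : {set {ffun T1 -> T1}}) (S2 : {set {ffun T2 -> T2}}).
Hypotheses (o1 : oneF _ \in S1) (o2 : oneF _ \in S2).

Definition psiP (U : finType) (A : {set U}) (X1 : {set {ffun T1 -> elt A}})
   (X2 : {set {ffun T2 -> elt (~: A)}}) : {set {ffun (T1 + T2)%type -> U}} :=
  [set sumf (postc val g1) (postc val g2) | g1 in X1, g2 in X2].

Lemma psiP_ok (U : finType) (A : {set U}) (X1 : sp_obj (Qsp S1) (elt A))
  (X2 : sp_obj (Qsp S2) (elt (~: A))) : Qok (Ssum S1 S2) (psiP (val X1) (val X2)).
Proof.
case: X1 X2 => [X1 /existsP[l1 /and3P[l1i c1 /eqP e1]]] [X2 /existsP[l2 /and3P[l2i c2 /eqP e2]]] /=.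
apply/existsP; exists (sumf (postc val l1) (postc val l2)).
rewrite /psiP e1 e2 sum_coset eqxx !andbT; apply/andP; split.
- apply/injectiveP => -[a|b] [a'|b']; rewrite !ffunE.
  + by move/val_inj/(injectiveP _ l1i) ->.
  + by move=> E; have := valP (l2 b'); rewrite -E inE (valP (l1 a)).
  + by move=> E; have := valP (l2 b); rewrite E inE (valP (l1 a')).
  + by move/val_inj/(injectiveP _ l2i) ->.
- by rewrite card_sum -(eqP c1) -(eqP c2) !card_elt cardsC.
Qed.

Definition phiP (U : finType) (z : sp_obj (prod_sp (Qsp S1) (Qsp S2)) U) :
  sp_obj (Qsp (Ssum S1 S2)) U :=
  let: existT A (X1, X2) := z in exist _ (psiP (val X1) (val X2)) (psiP_ok X1 X2).

Lemma phiP_nat (U V : finType) (s : bij U V) z :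
  phiP (sp_map (prod_sp (Qsp S1) (Qsp S2)) s z) = sp_map (Qsp (Ssum S1 S2)) s (phiP z).
Proof.
case: z => A [[X1 h1] [X2 h2]]; apply: val_inj => /=.
rewrite /psiP; apply/setP => g; apply/imset2P/imsetP.
- case=> g1' g2' /imsetP[g1 g1X ->] /imsetP[g2 g2X ->] ->.
  exists (sumf (postc val g1) (postc val g2)); first exact: imset2_f.
  by apply/ffunP => -[a|b]; rewrite !ffunE.
- case=> g0 /imset2P[g1 g2 g1X g2X ->] ->.
  exists (postc (restr_bij (@bij_in _ _ s A) (@bij_inV _ _ s A)) g1)
         (postc (restr_bij (@bij_inC _ _ s A) (@bij_inCV _ _ s A)) g2); try exact: imset_f.
  by apply/ffunP => -[a|b]; rewrite !ffunE.
Qed.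

Lemma Qwit (T U : finType) (Sg : {set {ffun T -> T}}) (X : {set {ffun T -> U}}) :
  oneF _ \in Sg -> Qok Sg X ->
  exists2 l : {ffun T -> U}, l \in X & [/\ injective l, #|U| = #|T| & X = cosetQ Sg l].
Proof.
move=> o /existsP[l /and3P[li cU /eqP e]]; exists l.
  by rewrite e; apply/imsetP; exists (oneF T) => //; apply/ffunP => t; rewrite !ffunE.
by split=> //; [exact/injectiveP | exact/eqP].
Qed.

Lemma psiP_sub (U : finType) (A A' : {set U}) (X1 : sp_obj (Qsp S1) (elt A))
  (X2 : sp_obj (Qsp S2) (elt (~: A))) (X1' : sp_obj (Qsp S1) (elt A'))
  (X2' : sp_obj (Qsp S2) (elt (~: A'))) :
  psiP (val X1) (val X2) = psiP (val X1') (val X2') -> A \subset A'.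
Proof.
move=> E; case: X1 X2 E => [X1 h1] [X2 h2] /= E.
have [l1 l1X [l1i c1 _]] := Qwit o1 h1.
have [l2 l2X _] := Qwit o2 h2.
apply/subsetP => u uA.
have /codomP[t1 et1] : (exist _ u uA : elt A) \in codom l1.
  by apply: inj_card_onto => //; rewrite c1.
have : sumf (postc val l1) (postc val l2) \in psiP X1 X2 by exact: imset2_f.
rewrite E => /imset2P[g1 g2 _ _ /ffunP /(_ (inl t1))]; rewrite !ffunE -et1 /= => ->.
exact: valP.
Qed.

Lemma psiP_inj (U : finType) (z z' : sp_obj (prod_sp (Qsp S1) (Qsp S2)) U) :
  phiP z = phiP z' -> z = z'.
Proof.
case: z z' => [A [X1 X2]] [A' [X1' X2']] /= /(congr1 val) /= E.
have eA : A = A' by apply/eqP; rewrite eqEsubset (psiP_sub E) (psiP_sub (esym E)).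
subst A'.
case: X1 X2 X1' X2' E => [X1 h1] [X2 h2] [X1' h1'] [X2' h2'] /= E.
have [l1 l1X _] := Qwit o1 h1. have [l2 l2X _] := Qwit o2 h2.
have [l1' l1X' _] := Qwit o1 h1'. have [l2' l2X' _] := Qwit o2 h2'.
have key : forall (Y1 Y1' : {set {ffun T1 -> elt A}}) (Y2 Y2' : {set {ffun T2 -> elt (~: A)}})
   k1 k2, k1 \in Y1 -> k2 \in Y2 -> psiP Y1 Y2 = psiP Y1' Y2' -> Y1 \subset Y1' /\ Y2 \subset Y2'.
  move=> Y1 Y1' Y2 Y2' k1 k2 k1Y k2Y EY; split; apply/subsetP => g gY.
  - have : sumf (postc val g) (postc val k2) \in psiP Y1 Y2 by exact: imset2_f.
    rewrite EY => /imset2P[g1 g2 g1Y _ /ffunP eg].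
    suff -> : g = g1 by [].
    by apply/ffunP => t; have := eg (inl t); rewrite !ffunE => /val_inj.
  - have : sumf (postc val k1) (postc val g) \in psiP Y1 Y2 by exact: imset2_f.
    rewrite EY => /imset2P[g1 g2 _ g2Y /ffunP eg].
    suff -> : g = g2 by [].
    by apply/ffunP => t; have := eg (inr t); rewrite !ffunE => /val_inj.
have [s1 s2] := key _ _ _ _ _ _ l1X l2X E.
have [s1' s2'] := key _ _ _ _ _ _ l1X' l2X' (esym E).
have e1 : X1 = X1' by apply/eqP; rewrite eqEsubset s1 s1'.
have e2 : X2 = X2' by apply/eqP; rewrite eqEsubset s2 s2'.
subst X1' X2'.
by rewrite (bool_irrelevance h1 h1') (bool_irrelevance h2 h2').
Qed.

Lemma phiP_surj (U : finType) (S : sp_obj (Qsp (Ssum S1 S2)) U) : exists z, phiP z = S.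
Proof.
case: S => S hS.
have [l _ [li cU eS]] := Qwit (oneF_Ssum o1 o2) hS.
pose A := (fun t => l (inl t)) @: [set: T1].
have inA : forall t, l (inl t) \in A by move=> t; exact: imset_f.
have inAC : forall t, l (inr t) \in ~: A.
  move=> t; rewrite inE; apply/imsetP => -[t' _ /li]; done.
pose l1 : {ffun T1 -> elt A} := [ffun t => exist _ (l (inl t)) (inA t)].
pose l2 : {ffun T2 -> elt (~: A)} := [ffun t => exist _ (l (inr t)) (inAC t)].
have cA : #|A| = #|T1|.
  by rewrite card_imset ?cardsT // => x y /li [].
have ok1 : Qok S1 (cosetQ S1 l1).
  apply/existsP; exists l1; rewrite eqxx card_elt cA eqxx !andbT.
  by apply/injectiveP => x y; rewrite !ffunE => /(congr1 val) /= /li [].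
have ok2 : Qok S2 (cosetQ S2 l2).
  apply/existsP; exists l2; rewrite eqxx card_elt !andbT.
  apply/andP; split.
    by apply/injectiveP => x y; rewrite !ffunE => /(congr1 val) /= /li [].
  by rewrite cardsCs setCK cU card_sum cA addKn.
exists (existT _ A (exist (fun X => Qok S1 X) _ ok1, exist (fun X => Qok S2 X) _ ok2)).
apply: val_inj => /=.
rewrite /psiP sum_coset eS; congr cosetQ.
by apply/ffunP => -[a|b]; rewrite !ffunE.
Qed.

Lemma Qprod_iso : species_iso (prod_sp (Qsp S1) (Qsp S2)) (Qsp (Ssum S1 S2)).
Proof.
exists phiP; split.
- move=> U; apply: injsurj_bij; [exact: psiP_inj | exact: phiP_surj].
- exact: phiP_nat.
Qed.
End QProd.

Section QConj.
Variables (T T' : finType) (Sg : {set {ffun T -> T}}) (Sg' : {set {ffun T' -> T'}}) (b : bij T' T).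
Hypothesis H1 : forall p, p \in Sg -> exists2 p', p' \in Sg' & forall t', p (b t') = b (p' t').
Hypothesis H2 : forall p', p' \in Sg' -> exists2 p, p \in Sg & forall t', p (b t') = b (p' t').

Definition precb (U : finType) (g : {ffun T -> U}) : {ffun T' -> U} := [ffun t' => g (b t')].

Lemma precb_coset (U : finType) (l : {ffun T -> U}) :
  [set precb g | g in cosetQ Sg l] = cosetQ Sg' (precb l).
Proof.
apply/setP => g; apply/imsetP/imsetP.
- case=> g0 /imsetP[p pS ->] ->; have [p' p'S e] := H1 pS.
  exists p' => //; apply/ffunP => t'; by rewrite !ffunE e.
- case=> p' p'S ->; have [p pS e] := H2 p'S.
  exists (prec p l); first exact: imset_f.
  by apply/ffunP => t'; rewrite !ffunE e.
Qed.

Lemma precb_ok (U : finType) (S : {set {ffun T -> U}}) : Qok Sg S -> Qok Sg' [set precb g | g in S].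
Proof.
case/existsP=> l /and3P[li cU /eqP ->]; apply/existsP; exists (precb l).
rewrite precb_coset eqxx (bij_card b) cU !andbT.
apply/injectiveP => x y; rewrite !ffunE => /(injectiveP _ li).
exact: (can_inj (@bK _ _ b)).
Qed.

Definition phiC (U : finType) (S : sp_obj (Qsp Sg) U) : sp_obj (Qsp Sg') U :=
  exist _ [set precb g | g in val S] (precb_ok (valP S)).

Lemma precb_inj (U : finType) : injective (@precb U).
Proof.
move=> g g' /ffunP E; apply/ffunP => t; have := E (binv b t); rewrite !ffunE bKV //.
Qed.

Lemma Qconj_iso : species_iso (Qsp Sg) (Qsp Sg').
Proof.
exists phiC; split.
- move=> U; apply: injsurj_bij.
  + move=> [S hS] [S' hS'] /(congr1 val) /= /imset_inj E.
    by apply: val_inj => /=; apply: E; exact: precb_inj.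
  + move=> [S' hS']; case/existsP: (hS') => l' /and3P[li cU /eqP eS].
    pose l := [ffun t => l' (binv b t)].
    have ok : Qok Sg (cosetQ Sg l).
      apply/existsP; exists l; rewrite eqxx -(bij_card b) cU !andbT.
      apply/injectiveP => x y; rewrite !ffunE => /(injectiveP _ li).
      exact: (can_inj (@bKV _ _ b)).
    exists (exist (fun X => Qok Sg X) _ ok); apply: val_inj => /=.
    rewrite precb_coset eS; congr cosetQ; apply/ffunP => t'; by rewrite !ffunE bK.
- move=> U V s [S hS]; apply: val_inj => /=.
  rewrite -!imset_comp; apply: eq_imset => g /=.
  by apply/ffunP => t; rewrite !ffunE.
Qed.
End QConj.

Definition swapf (A B : Type) (t : A + B) : B + A :=
  match t with inl a => inr a | inr b => inl b end.
Lemma swapfK A B : cancel (@swapf A B) (@swapf B A). Proof. by case. Qed.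
Definition swapb (A B : finType) : bij (A + B)%type (B + A)%type :=
  Bij (@swapfK A B) (@swapfK B A).

Lemma Ssum_comm (T1 T2 : finType) (S1 : {set {ffun T1 -> T1}}) (S2 : {set {ffun T2 -> T2}}) :
  species_iso (Qsp (Ssum S1 S2)) (Qsp (Ssum S2 S1)).
Proof.
apply: (@Qconj_iso _ _ _ _ (swapb T2 T1)).
- move=> p /imset2P[p1 p2 p1S p2S ->].
  exists (sumf (postc inl p2) (postc inr p1)); first exact: imset2_f.
  by case=> t; rewrite /sumf /postc /= !ffunE.
- move=> p /imset2P[p2 p1 p2S p1S ->].
  exists (sumf (postc inl p1) (postc inr p2)); first exact: imset2_f.
  by case=> t; rewrite /sumf /postc /= !ffunE.
Qed.

Definition assf (A B C : Type) (t : (A + B) + C) : A + (B + C) :=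
  match t with inl (inl a) => inl a | inl (inr b) => inr (inl b) | inr c => inr (inr c) end.
Definition assf' (A B C : Type) (t : A + (B + C)) : (A + B) + C :=
  match t with inl a => inl (inl a) | inr (inl b) => inl (inr b) | inr (inr c) => inr c end.
Lemma assfK A B C : cancel (@assf A B C) (@assf' A B C). Proof. by do 2?case. Qed.
Lemma assfK' A B C : cancel (@assf' A B C) (@assf A B C). Proof. by do 2?case. Qed.
Definition assb (A B C : finType) : bij ((A + B) + C)%type (A + (B + C))%type :=
  Bij (@assfK A B C) (@assfK' A B C).

Lemma Ssum_assoc (T1 T2 T3 : finType) (S1 : {set {ffun T1 -> T1}}) (S2 : {set {ffun T2 -> T2}})
  (S3 : {set {ffun T3 -> T3}}) :
  species_iso (Qsp (Ssum S1 (Ssum S2 S3))) (Qsp (Ssum (Ssum S1 S2) S3)).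
Proof.
apply: (@Qconj_iso _ _ _ _ (assb T1 T2 T3)).
- move=> p /imset2P[p1 q p1S /imset2P[p2 p3 p2S p3S ->] ->].
  exists (sumf (postc inl (sumf (postc inl p1) (postc inr p2))) (postc inr p3)).
    by apply: imset2_f => //; exact: imset2_f.
  by case=> [[a|b]|c]; rewrite /sumf /postc /= !ffunE.
- move=> p /imset2P[q p3 /imset2P[p1 p2 p1S p2S ->] p3S ->].
  exists (sumf (postc inl p1) (postc inr (sumf (postc inl p2) (postc inr p3)))).
    by apply: imset2_f => //; exact: imset2_f.
  by case=> [[a|b]|c]; rewrite /sumf /postc /= !ffunE.
Qed.

Definition isQ (F : species) : Prop :=
  exists (T : finType) (Sg : {set {ffun T -> T}}), oneF T \in Sg /\ species_iso F (Qsp Sg).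

Lemma isQ_prod F G : isQ F -> isQ G -> isQ (prod_sp F G).
Proof.
case=> T1 [S1 [o1 i1]] [T2 [S2 [o2 i2]]].
exists (T1 + T2)%type, (Ssum S1 S2); split; first exact: oneF_Ssum.
exact: iso_trans (prod_cong i1 i2) (Qprod_iso o1 o2).
Qed.

Lemma prod_comm F G : isQ F -> isQ G -> species_iso (prod_sp F G) (prod_sp G F).
Proof.
case=> T1 [S1 [o1 i1]] [T2 [S2 [o2 i2]]].
apply: iso_trans (prod_cong i1 i2) _.
apply: iso_trans (Qprod_iso o1 o2) _.
apply: iso_trans (Ssum_comm S1 S2) _.
apply: iso_trans (iso_sym (Qprod_iso o2 o1)) _.
exact: prod_cong (iso_sym i2) (iso_sym i1).
Qed.

Lemma prod_assoc F G H : isQ F -> isQ G -> isQ H ->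
  species_iso (prod_sp F (prod_sp G H)) (prod_sp (prod_sp F G) H).
Proof.
case=> T1 [S1 [o1 i1]] [T2 [S2 [o2 i2]]] [T3 [S3 [o3 i3]]].
apply: iso_trans (prod_cong i1 (prod_cong i2 i3)) _.
apply: iso_trans (prod_cong (iso_refl _) (Qprod_iso o2 o3)) _.
apply: iso_trans (Qprod_iso o1 (oneF_Ssum o2 o3)) _.
apply: iso_trans (Ssum_assoc S1 S2 S3) _.
apply: iso_trans (iso_sym (Qprod_iso (oneF_Ssum o1 o2) o3)) _.
apply: iso_trans (prod_cong (iso_sym (Qprod_iso o1 o2)) (iso_refl _)) _.
exact: prod_cong (prod_cong (iso_sym i1) (iso_sym i2)) (iso_sym i3).
Qed.

Fixpoint allQ (l : seq species) : Prop :=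
  match l with [::] => True | F :: l' => isQ F /\ allQ l' end.

Lemma allQ_rcons l F : allQ l -> isQ F -> allQ (rcons l F).
Proof.
elim: l => [|G l IH] /=; first by move=> _ hF; split.
by case=> hG hl hF; split => //; exact: IH.
Qed.

Lemma allQ_rev l : allQ l -> allQ (rev l).
Proof. elim: l => [|F l IH] //= [hF hl]; rewrite rev_cons; exact: allQ_rcons (IH hl) hF. Qed.

Lemma isQ_list F l : isQ F -> allQ l -> isQ (prod_list (F :: l)).
Proof.
elim: l F => [|G l IH] F //= hF [hG hl].
exact: isQ_prod hF (IH G hG hl).
Qed.

Lemma prod_list_rcons F G l : isQ F -> allQ l -> isQ G ->
  species_iso (prod_list (rcons (F :: l) G)) (prod_sp (prod_list (F :: l)) G).
Proof.
elim: l F => [|H l IH] F hF /=; first by move=> _ _; exact: iso_refl.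
move=> [hH hl] hG.
apply: iso_trans (prod_cong (iso_refl F) (IH H hH hl hG)) _.
exact: prod_assoc hF (isQ_list hH hl) hG.
Qed.

Lemma prod_list_rev l : allQ l -> species_iso (prod_list (rev l)) (prod_list l).
Proof.
elim: l => [|F l IH] /=; first by move=> _; exact: iso_refl.
case=> hF hl; rewrite rev_cons.
case: l IH hl => [|G l] IH hl; first exact: iso_refl.
have hr := allQ_rev hl.
have hGl : isQ (prod_list (G :: l)) by case: hl => hG hl0; exact: isQ_list.
case E: (rev (G :: l)) hr IH => [|H m] hr IH.
  by move/(congr1 size): E; rewrite size_rev.
case: hr => hH hm.
apply: iso_trans (prod_list_rcons hH hm hF) _.
apply: iso_trans (prod_cong (IH (hl)) (iso_refl F)) _.
exact: prod_comm hGl hF.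
Qed.

Section Xa.
Variable a : nat.
Definition xl (U : finType) (y : sp_obj (Xpow a) U) : {ffun 'I_a -> U} := sval y.
Lemma xl_inj U (y : sp_obj (Xpow a) U) : injective (xl y).
Proof. by case: y => l /= /andP[/injectiveP li _]. Qed.
Lemma xl_card U (y : sp_obj (Xpow a) U) : #|U| = a.
Proof. by case: y => l /= /andP[_ /eqP]. Qed.
Lemma xl_onto U (y : sp_obj (Xpow a) U) (u : U) : exists j, xl y j = u.
Proof.
have /codomP[j ->] : u \in codom (xl y).
  by apply: inj_card_onto; [exact: xl_inj | rewrite card_ord xl_card].
by exists j.
Qed.
Lemma xl_map U V (s : bij U V) (y : sp_obj (Xpow a) U) :
  xl (sp_map (Xpow a) s y) = [ffun i => s (xl y i)].
Proof.
case: y => l H /=; rewrite /xl /=.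
match goal with |- context [match ?t with conj _ _ => _ end] => case: t end.
by [].
Qed.
End Xa.

Lemma part_eq (U : finType) (P : {set {set U}}) (B1 B2 : {set U}) u :
  partition P [set: U] -> B1 \in P -> B2 \in P -> u \in B1 -> u \in B2 -> B1 = B2.
Proof.
case/and3P=> _ tP _ h1 h2 u1 u2.
by rewrite -(def_pblock tP h1 u1) (def_pblock tP h2 u2).
Qed.

Lemma part_cover (U : finType) (P : {set {set U}}) (u : U) :
  partition P [set: U] -> exists2 B, B \in P & u \in B.
Proof.
case/and3P=> /eqP cP _ _.
have : u \in cover P by rewrite cP inE.
by case/bigcupP => B BP uB; exists B.
Qed.

Section Comp.
Variables (T : finType) (Sg : {set {ffun T -> T}}) (a : nat).
Hypotheses (o : oneF T \in Sg) (apos : 0 < a).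

Definition qa (q : {ffun T -> T}) : {ffun (T * 'I_a)%type -> (T * 'I_a)%type} :=
  [ffun p => (q p.1, p.2)].
Definition Sga := [set qa q | q in Sg].

Lemma oneF_Sga : oneF _ \in Sga.
Proof. by apply/imsetP; exists (oneF T) => //; apply/ffunP => -[t j]; rewrite !ffunE. Qed.

Section Fix.
Variables (U : finType) (P : {set {set U}}) (pP : partition P [set: U])
  (h : {dffun forall B : blk P, sp_obj (Xpow a) (elt (val B))}).

Definition lc (c : {ffun T -> blk P}) : {ffun (T * 'I_a)%type -> U} :=
  [ffun p => val (xl (h (c p.1)) p.2)].

Lemma blockE (B : blk P) : val B = [set val (xl (h B) j) | j : 'I_a].
Proof.
apply/setP => u; apply/idP/imsetP.
- move=> uB; have [j ej] := xl_onto (h B) (exist _ u uB).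
  by exists j => //; rewrite ej.
- by case=> j _ ->; exact: valP.
Qed.

Lemma lc_coset (c1 : {ffun T -> blk P}) :
  [set lc c | c in cosetQ Sg c1] = cosetQ Sga (lc c1).
Proof.
rewrite /cosetQ /Sga -!imset_comp; apply: eq_imset => q /=.
apply/ffunP => -[t j]; rewrite /lc /prec /qa !ffunE /=;
by [].
Qed.

Lemma lc_inj (c1 : {ffun T -> blk P}) : injective c1 -> injective (lc c1).
Proof.
move=> ci [t j] [t' j']; rewrite !ffunE => E.
have e : c1 t = c1 t'.
  apply: val_inj; apply: (part_eq pP (valP _) (valP _) (valP (xl (h (c1 t)) j))).
  by rewrite E; exact: valP.
have et := ci _ _ e; subst t'.
by move/val_inj/xl_inj: E => /= ->.
Qed.

Lemma lc_onto (c1 : {ffun T -> blk P}) : injective c1 -> #|blk P| = #|T| ->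
  forall u, exists p, lc c1 p = u.
Proof.
move=> ci cP u; have [B BP uB] := part_cover u pP.
have /codomP[t et] : (exist _ B BP : blk P) \in codom c1.
  by apply: inj_card_onto => //; rewrite cP.
have : u \in val (c1 t) by rewrite -et.
rewrite blockE => /imsetP[j _ ->].
by exists (t, j); rewrite ffunE.
Qed.

Lemma psiK_ok (x : sp_obj (Qsp Sg) (blk P)) : Qok Sga [set lc c | c in val x].
Proof.
case: x => X hX /=; have [c1 _ [ci cP eX]] := Qwit o hX.
apply/existsP; exists (lc c1); rewrite eX lc_coset eqxx andbT.
have li := lc_inj ci; apply/andP; split; first exact/injectiveP.
apply/eqP; apply/esym/bij_eq_card; apply: (@injsurj_bij _ _ (lc c1)) => //.
exact: lc_onto ci cP.
Qed.
End Fix.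

Definition phiK (U : finType) (z : sp_obj (comp_sp (Qsp Sg) (Xpow a)) U) : sp_obj (Qsp Sga) U :=
  let: existT P (x, h) := z in
  exist _ [set lc h c | c in val x] (psiK_ok (valP P) h x).

Lemma restr_val (U V : finType) (s : bij U V) (A : {set U}) (A' : {set V}) h1 h2 (y : elt A) :
  val (@restr_bij U V s A A' h1 h2 y) = s (val y).
Proof. by []. Qed.

Lemma comp_map_eq (F G : species) (U V : finType) (s : bij U V) (P : {set {set U}})
  (pP : partition P [set: U]) x h :
  sp_map (comp_sp F G) s (existT _ (exist _ P pP) (x, h)) =
  existT (fun i : {P : {set {set V}} | partition P [set: V]} =>
            (sp_obj F (blk (val i)) * {dffun forall B : blk (val i), sp_obj G (elt (val B))})%type)
   (exist _ (set_bij s @: P) (bij_partition s pP))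
   (sp_map F (restr_bij (@bij_in _ _ (set_bij s) P) (@bij_inV _ _ (set_bij s) P)) x,
    [ffun B' : blk (set_bij s @: P) =>
      sp_map G (restr_bij (@bij_inV _ _ (bij_inv s) (val B')) (@bij_in _ _ (bij_inv s) (val B')))
        (h (binv (restr_bij (@bij_in _ _ (set_bij s) P) (@bij_inV _ _ (set_bij s) P)) B'))]).
Proof. reflexivity. Qed.

Lemma phiK_val (U : finType) P x h :
  val (@phiK U (existT _ P (x, h))) = [set lc h c | c in val x].
Proof. by []. Qed.

Lemma Qmap_val (T' : finType) (Sg' : {set {ffun T' -> T'}}) (U V : finType) (s : bij U V) S :
  val (sp_map (Qsp Sg') s S) = [set postc s g | g in val S].
Proof. by []. Qed.

Lemma phiK_nat (U V : finType) (s : bij U V) z :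
  phiK (sp_map (comp_sp (Qsp Sg) (Xpow a)) s z) = sp_map (Qsp Sga) s (phiK z).
Proof.
case: z => [[P pP] [X h]]; rewrite comp_map_eq.
set sb := restr_bij _ _.
set h' := finfun _.
apply: val_inj; rewrite phiK_val !Qmap_val phiK_val.
rewrite -!imset_comp; apply: eq_imset => c.
apply/ffunP => -[t j]; rewrite /postc /lc !ffunE.
rewrite xl_map ffunE restr_val; congr (s _).
change (val (xl (h (binv sb (sb (c t)))) j) = val (xl (h (c t)) j)).
by rewrite bK.
Qed.

Lemma xl_eq (U : finType) (y y' : sp_obj (Xpow a) U) : xl y = xl y' -> y = y'.
Proof.
case: y y' => l H [l' H'] /= e; rewrite /xl /= in e; subst l'.
by rewrite (bool_irrelevance H H').
Qed.

Lemma lc_blocks (U : finType) (P P' : {set {set U}}) h h' (c : {ffun T -> blk P})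
  (c' : {ffun T -> blk P'}) : lc h c = lc h' c' -> forall t, val (c t) = val (c' t).
Proof.
move=> /ffunP E t; rewrite (blockE h (c t)) (blockE h' (c' t)).
by apply: eq_imset => j; have := E (t, j); rewrite !ffunE.
Qed.

Lemma lc_subP (U : finType) (P P' : {set {set U}}) h h' (X : {set {ffun T -> blk P}})
  (X' : {set {ffun T -> blk P'}}) : Qok Sg X ->
  [set lc h c | c in X] = [set lc h' c | c in X'] -> P \subset P'.
Proof.
move=> hX E; have [c1 c1X [ci cP _]] := Qwit o hX.
have : lc h c1 \in [set lc h' c | c in X'] by rewrite -E; exact: imset_f.
case/imsetP => c'' _ e.
apply/subsetP => B BP.
have /codomP[t et] : (exist _ B BP : blk P) \in codom c1.
  by apply: inj_card_onto => //; rewrite cP.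
have -> : B = val (c1 t) by rewrite -et.
rewrite (lc_blocks e); exact: valP.
Qed.

Lemma phiK_inj (U : finType) (z z' : sp_obj (comp_sp (Qsp Sg) (Xpow a)) U) :
  phiK z = phiK z' -> z = z'.
Proof.
case: z z' => [[P pP] [[X hX] h]] [[P' pP'] [[X' hX'] h']] /(congr1 val).
rewrite !phiK_val /= => E.
have eP : P = P' by apply/eqP; rewrite eqEsubset (lc_subP hX E) (lc_subP hX' (esym E)).
subst P'; rewrite (bool_irrelevance pP' pP) in h' X' hX' E *.
have key : forall (Y Y' : {set {ffun T -> blk P}}) h1 h2,
    [set lc h1 c | c in Y] = [set lc h2 c | c in Y'] -> Y \subset Y'.
  move=> Y Y' h1 h2 EY; apply/subsetP => c cY.
  have : lc h1 c \in [set lc h2 c | c in Y'] by rewrite -EY; exact: imset_f.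
  case/imsetP => c'' c''Y e.
  suff -> : c = c'' by [].
  by apply/ffunP => t; apply: val_inj; exact: lc_blocks e t.
have eX : X = X' by apply/eqP; rewrite eqEsubset (key _ _ _ _ E) (key _ _ _ _ (esym E)).
subst X'; rewrite (bool_irrelevance hX' hX).
have [c1 c1X [ci cP _]] := Qwit o hX.
have : lc h c1 \in [set lc h' c | c in X] by rewrite -E; exact: imset_f.
case/imsetP => c'' _ e.
have ec : c'' = c1.
  by apply/ffunP => t; apply: val_inj; symmetry; exact: lc_blocks e t.
subst c''.
suff -> : h = h' by [].
apply/ffunP => B.
have /codomP[t ->] : B \in codom c1 by apply: inj_card_onto => //; rewrite cP.
apply: xl_eq; apply/ffunP => j; apply: val_inj.
by move/ffunP: e => /(_ (t, j)); rewrite !ffunE.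
Qed.

Lemma xl_exists (W : finType) (f : {ffun 'I_a -> W}) :
  injective f -> #|W| = a -> exists y : sp_obj (Xpow a) W, xl y = f.
Proof.
move=> fi cW.
have pf : injectiveb f && (#|W| == a) by rewrite cW eqxx andbT; exact/injectiveP.
by exists (exist (fun l : {ffun 'I_a -> W} => injectiveb l && (#|W| == a)) f pf).
Qed.

Lemma phiK_surj (U : finType) (S : sp_obj (Qsp Sga) U) : exists z, phiK z = S.
Proof.
case: S => S hS; have [l _ [li cU eS]] := Qwit oneF_Sga hS.
pose j0 : 'I_a := Ordinal apos.
pose Bt := fun t => [set l (t, j) | j in [set: 'I_a]].
have inBt : forall t j, l (t, j) \in Bt t by move=> t j; exact: imset_f.
have Bt_inj : injective Bt.
  move=> t t' e; have := inBt t j0; rewrite e => /imsetP[j _ /li [] //].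
pose P := [set Bt t | t in [set: T]].
have BtP : forall t, Bt t \in P by move=> t; exact: imset_f.
have lonto : forall u, exists p, l p = u.
  move=> u; have /codomP[p ->] : u \in codom l.
    by apply: inj_card_onto => //; rewrite cU.
  by exists p.
have pP : partition P [set: U].
  apply/and3P; split.
  - apply/eqP/setP => u; rewrite inE; have [[t j] <-] := lonto u.
    by apply/bigcupP; exists (Bt t).
  - apply/trivIsetP => A B /imsetP[t _ ->] /imsetP[t' _ ->] neq.
    rewrite -setI_eq0; apply/eqP/setP => u; rewrite !inE.
    apply/andP => -[/imsetP[j _ ->] /imsetP[j' _ /li [et _]]].
    by rewrite et eqxx in neq.
  - apply/imsetP => -[t _ e]; have := inBt t j0; by rewrite -e inE.
pose c0 : {ffun T -> blk P} := [ffun t => exist _ (Bt t) (BtP t)].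
have c0i : injective c0.
  by move=> t t'; rewrite !ffunE => /(congr1 val) /= /Bt_inj.
have cP : #|blk P| = #|T|.
  by rewrite (card_elt P) card_imset ?cardsT. 
have okx : Qok Sg (cosetQ Sg c0).
  apply/existsP; exists c0; rewrite cP !eqxx !andbT; exact/injectiveP.
pose x := exist (fun X => Qok Sg X) _ okx : sp_obj (Qsp Sg) (blk P).
pose predB (B : blk P) (y : sp_obj (Xpow a) (elt (val B))) :=
  [exists t, (Bt t == val B) && [forall j, val (xl y j) == l (t, j)]].
have exB : forall B : blk P, exists y, predB B y.
  case=> B BP; have /imsetP[t _ eB] := BP.
  have inB : forall j, l (t, j) \in B by move=> j; rewrite eB.
  pose f : {ffun 'I_a -> elt B} := [ffun j => exist _ (l (t, j)) (inB j)].
  have fi : injective f by move=> j j'; rewrite !ffunE => /(congr1 val) /= /li [].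
  have fc : #|elt B| = a.
    rewrite card_elt eB card_imset ?cardsT ?card_ord //.
    by move=> j j' /li [].
  have [y ey] := xl_exists fi fc.
  exists y; apply/existsP; exists t; apply/andP; split; first by rewrite /= eB.
  by apply/forallP => j; rewrite ey ffunE.
pose h : {dffun forall B : blk P, sp_obj (Xpow a) (elt (val B))} :=
  finfun (fun B => xchoose (exB B)).
exists (existT (fun i : {P : {set {set U}} | partition P [set: U]} =>
            (sp_obj (Qsp Sg) (blk (val i)) *
             {dffun forall B : blk (val i), sp_obj (Xpow a) (elt (val B))})%type)
          (exist _ P pP) (x, h)).
subst S; apply: val_inj; rewrite phiK_val /= lc_coset; congr cosetQ.
have hP : forall B, predB B (h B) by move=> B; rewrite /h ffunE; exact: xchooseP.
apply/ffunP => -[t j].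
have := hP (c0 t); case/existsP => t' /andP[/eqP e /forallP /(_ j) /eqP E].
rewrite ffunE; change (val (xl (h (c0 t)) j) = l (t, j)); rewrite E.
by move: e; rewrite ffunE /= => /Bt_inj ->.
Qed.

Lemma comp_iso : species_iso (Qsp Sga) (comp_sp (Qsp Sg) (Xpow a)).
Proof.
apply: iso_sym; exists phiK; split.
- move=> U; apply: injsurj_bij; [exact: phiK_inj | exact: phiK_surj].
- exact: phiK_nat.
Qed.
End Comp.

Lemma cyc_nseq a i j k : k < i -> j < a ->
  cyc_fun (nseq a i) (j * i + k) = j * i + cyc_fun [:: i] k.
Proof.
move=> ki; elim: a j => [|a IH] [|j] //= ja.
- by rewrite mul0n !add0n ki.
- rewrite ifF; last by lia.
  have -> : j.+1 * i + k - i = j * i + k by rewrite mulSn; lia.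
  by rewrite IH //= ki mulSn addnA.
Qed.

Section Sig.
Variables (i a : nat).
Hypotheses (ipos : 0 < i) (apos : 0 < a).
Let m := sumn [:: i].
Let N := sumn (nseq a i).
Lemma mE : m = i. Proof. by rewrite /m /= addn0. Qed.
Lemma NE : N = a * i. Proof. by rewrite /N sumn_nseq mulnC. Qed.

Lemma bf_lt (p : ('I_m * 'I_a)%type) : p.2 * m + p.1 < N.
Proof.
case: p => [k j] /=; rewrite NE; move: (ltn_ord k) (ltn_ord j).
move: (nat_of_ord k) (nat_of_ord j) => k' j'; rewrite mE => h1 h2; nia.
Qed.
Definition bfun' (p : ('I_m * 'I_a)%type) : 'I_N := Ordinal (bf_lt p).
Lemma bfun_inj : injective bfun'.
Proof.
move=> [k j] [k' j'] /(congr1 val) /= E.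
have hk := ltn_ord k; have hk' := ltn_ord k'.
have ek : k = k' :> nat.
  by have := congr1 (modn^~ m) E; rewrite !modnMDl !modn_small.
have ej : j = j' :> nat.
  have := congr1 (divn^~ m) E; rewrite !divnMDl ?divn_small ?addn0 //; lia.
by congr pair; apply: val_inj.
Qed.
Lemma bfun_bij : bijective bfun'.
Proof. apply: inj_card_bij; first exact: bfun_inj. by rewrite card_prod !card_ord NE mE mulnC. Qed.
Definition bb : bij ('I_m * 'I_a)%type 'I_N := Bij (binvfK' bfun_bij) (binvfK bfun_bij).

Lemma sig_step (p : ('I_m * 'I_a)%type) :
  sigma (nseq a i) (bb p) = bb (sigma [:: i] p.1, p.2).
Proof.
apply: val_inj; rewrite /= !permE /=.
case: p => [k j] /=; move: (ltn_ord k) (ltn_ord j); move: (nat_of_ord k) (nat_of_ord j) => k' j'; rewrite mE => hk hj.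
by rewrite cyc_nseq //= hk.
Qed.

Lemma sig_pow r p :
  (sigma (nseq a i) ^+ r)%g (bb p) = bb ((sigma [:: i] ^+ r)%g p.1, p.2).
Proof.
elim: r p => [|r IH] p; first by rewrite !expg0 !perm1; case: p.
by rewrite !expgSr !permM IH sig_step.
Qed.

Lemma Cyc_comp : species_iso (Cyc (nseq a i)) (comp_sp (Cyc [:: i]) (Xpow a)).
Proof.
apply: iso_trans (quot_Q _) _.
have o1 := oneF_SgH <[sigma [:: i]]>%G.
apply: iso_trans _ (comp_cong _ (iso_sym (quot_Q _))).
apply: iso_trans _ (comp_iso o1 apos).
apply: (@Qconj_iso _ _ _ _ bb).
- move=> p /imsetP[f /cycleP[r ->] ->].
  exists (qa a [ffun x => (sigma [:: i] ^+ r)%g x]).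
    by apply: imset_f; apply: imset_f; exact: mem_cycle.
  by move=> t'; rewrite !ffunE sig_pow.
- move=> p' /imsetP[q /imsetP[f /cycleP[r ->] ->] ->].
  exists [ffun x => (sigma (nseq a i) ^+ r)%g x].
    by apply: imset_f; exact: mem_cycle.
  by move=> t'; rewrite !ffunE sig_pow.
Qed.
End Sig.

Unset Implicit Arguments.
Set Strict Implicit.

Theorem mainTheorem3 (n : nat) (alpha : seq (nat * nat)) :
  uniq [seq p.1 | p <- alpha] ->
  all (fun p => 0 < p.1) alpha ->
  all (fun p => 0 < p.2) alpha ->
  sumn [seq p.1 * p.2 | p <- alpha] = n ->
  species_iso (Kalpha alpha)
    (prod_list [seq comp_sp (Cyc [:: p.1]) (Xpow p.2) | p <- alpha]).
Proof.
move=> _ h1 h2 _.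
rewrite /Kalpha map_rev.
have hQ : allQ [seq Cyc (nseq p.2 p.1) | p <- alpha].
  elim: alpha {h1 h2} => [|p s IH] //=; split => //.
  exists _, (SgH <[sigma (nseq p.2 p.1)]>%G).
  split; [exact: oneF_SgH | exact: quot_Q].
apply: iso_trans (prod_list_rev hQ) _.
apply: prod_list_cong => p pin.
apply: Cyc_comp; [exact: (allP h1 p pin) | exact: (allP h2 p pin)].
Qed.
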